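(* Let $k\ge2$ and $n\le0$, and write $q=q_{n,k}$, $r=r_{n,k}$. Set $$d_{n,k}=\begin{cases}|n|+1-k,& r=0,\\ |n|+1-kr,& 1\le r\le k-1.\end{cases}$$ Then $\mathcal{F}_{n,k}\equiv0$ if and only if $d_{n,k}<0$. If $d_{n,k}\ge0$, then $\mathcal{F}_{n,k}(x)$ has degree exactly $d_{n,k}$, and its leading term is $x^{|n|+1-k}$ when $r=0$, and $(-1)^r\binom{q-1}{r-1}x^{|n|+1-kr}$ when $1\le r\le k-1$. In particular, for $k\ge3$ the degree of the nonvanishing polynomials $\mathcal{F}_{n,k}$, $n<0$, is not a monotonically nondecreasing function of $|n|$.
   Context: For $k\ge2$, the polynomials $\mathcal{F}_{n,k}(x)\in\mathbb{Z}[x]$ ($n\in\mathbb{Z}$) are defined by $\mathcal{F}_{1,k}=1$, $\mathcal{F}_{n,k}=0$ for $n=0,-1,\dots,-(k-2)$, and $\mathcal{F}_{n,k}(x)=\sum_{j=1}^{k}x^{k-j}\mathcal{F}_{n-j,k}(x)$ for all $n\in\mathbb{Z}$. This recurrence is used upwards for $n\ge2$, and downwards for $n\le-(k-1)$ as $\mathcal{F}_{n,k}=\mathcal{F}_{n+k,k}-\sum_{j=1}^{k-1}x^j\mathcal{F}_{n+j,k}$. For $n\le0$, set $q_{n,k}=\lfloor(|n|+1)/k\rfloor$ and let $r_{n,k}\in\{0,\dots,k-1\}$ be the residue of $|n|+1$ modulo $k$. Then $|n|+1=kq_{n,k}+r_{n,k}$. *)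

(* Defs.v *)
From HB Require Import structures.
From mathcomp Require Import all_boot all_order all_algebra.
Set Implicit Arguments. Unset Strict Implicit. Unset Printing Implicit Defensive.
Import Order.TTheory GRing.Theory Num.Theory.
Local Open Scope ring_scope.

Fixpoint recseq (T : Type) (f : seq T -> T) (m : nat) : seq T :=
  match m with
  | 0 => [:: f [::]]
  | m'.+1 => let s := recseq f m' in rcons s (f s)
  end.

(* Downward part: Fdown k m = F_{1-m,k}.  F_1 = 1, F_0 = ... = F_{-(k-2)} = 0,
   and for 1 - m <= -(k-1) (i.e. m >= k):
   F_{1-m} = F_{1-m+k} - sum_{j=1}^{k-1} x^j F_{1-m+j}. *)
Definition stepDown (k : nat) (s : seq {poly int}) : {poly int} :=
  let m := size s in
  if m == 0%N then 1
  else if (m < k)%N then 0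
  else nth 0 s (m - k) - \sum_(1 <= j < k) 'X^j * nth 0 s (m - j).

Definition Fdown (k m : nat) : {poly int} := nth 0 (recseq (stepDown k) m) m.

(* Upward part: Fup k i = F_{i-(k-2),k}; F_{-(k-2)} = ... = F_0 = 0, F_1 = 1,
   and for n >= 2: F_n = sum_{j=1}^k x^(k-j) F_{n-j}. *)
Definition stepUp (k : nat) (s : seq {poly int}) : {poly int} :=
  let i := size s in
  if (i < k.-1)%N then 0
  else if i == k.-1 then 1
  else \sum_(1 <= j < k.+1) 'X^(k - j) * nth 0 s (i - j).

Definition Fup (k i : nat) : {poly int} := nth 0 (recseq (stepUp k) i) i.

Definition Fnk (n : int) (k : nat) : {poly int} :=
  match n with
  | Posz 0 => Fdown k 1
  | Posz m.+1 => Fup k (m + k - 1)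
  | Negz m => Fdown k m.+2
  end.

Definition qnk (n : int) (k : nat) : nat := ((`|n|%N).+1 %/ k)%N.
Definition rnk (n : int) (k : nat) : nat := ((`|n|%N).+1 %% k)%N.

Definition dnk (n : int) (k : nat) : int :=
  if rnk n k == 0%N then (`|n|%N.+1)%:Z - k%:Z
  else (`|n|%N.+1)%:Z - (k * rnk n k)%N%:Z.

(* Main.v *)
Require Import Defs.
From HB Require Import structures.
From mathcomp Require Import all_boot all_order all_algebra.
From mathcomp Require Import zify ring.
Import Order.TTheory GRing.Theory Num.Theory.
Local Open Scope ring_scope.

Section Rec.
Variable T : Type.
Variable f : seq T -> T.
Variable x0 : T.

Lemma size_recseq m : size (recseq f m) = m.+1.
Proof. by elim: m => [|m IH] //=; rewrite size_rcons IH. Qed.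

Lemma nth_recseq m i : (i <= m)%N ->
  nth x0 (recseq f m) i = nth x0 (recseq f i) i.
Proof.
elim: m => [|m IH]; first by rewrite leqn0 => /eqP ->.
rewrite leq_eqVlt => /orP [/eqP -> //| Hi].
by rewrite /= nth_rcons size_recseq Hi IH.
Qed.

Lemma nth_recseqS m : nth x0 (recseq f m.+1) m.+1 = f (recseq f m).
Proof. by rewrite /= nth_rcons size_recseq ltnn eqxx. Qed.

End Rec.
Arguments nth_recseq {T f x0 m i}.

Section Down.
Variable k : nat.
Hypothesis hk : (2 <= k)%N.
Local Notation D := (Fdown k).

Lemma D0 : D 0 = 1.
Proof. by []. Qed.

Lemma DS m : D m.+1 = stepDown k (recseq (stepDown k) m).
Proof. by rewrite /Fdown nth_recseqS. Qed.

Lemma Dsmall m : (0 < m < k)%N -> D m = 0.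
Proof.
case: m => [//|m] /andP [_ H].
by rewrite DS /stepDown size_recseq /= H.
Qed.

Lemma Dk : D k = 1.
Proof.
have Hk : k = k.-1.+1 by lia.
rewrite {2}Hk DS /stepDown size_recseq -Hk.
have -> : (k == 0%N) = false by lia.
rewrite ltnn subnn (nth_recseq (leq0n _)) -/(Fdown k 0) D0.
rewrite big_nat big1 ?subr0 // => j /andP [j1 jk].
rewrite (nth_recseq (_ : (k - j <= k.-1)%N)); last by lia.
rewrite -/(Fdown _ _) Dsmall ?mulr0 //.
by apply/andP; split; lia.
Qed.

Lemma Drec m : (k <= m)%N ->
  D m = D (m - k) - \sum_(1 <= j < k) 'X^j * D (m - j).
Proof.
case: m => [|m] Hm; first by move: hk Hm; lia.
rewrite DS /stepDown size_recseq.
have -> : (m.+1 == 0)%N = false by [].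
have -> : (m.+1 < k)%N = false by apply/negbTE; rewrite -leqNgt.
rewrite (nth_recseq (_ : (m.+1 - k <= m)%N)); last by lia.
congr (_ - _).
apply: eq_big_nat => j /andP [j1 jk].
by rewrite (nth_recseq (_ : (m.+1 - j <= m)%N)) //; lia.
Qed.

Definition S m := \sum_(j < k) 'X^j * D (m - j).

Lemma S_big m : (k <= m)%N -> S m = D (m - k).
Proof.
move=> Hm; rewrite /S -(big_mkord xpredT (fun j => 'X^j * D (m - j))).
rewrite big_ltn; last by lia.
by rewrite expr0 mul1r subn0 (Drec _ Hm) subrK.
Qed.

Lemma S_tel m : (k <= m)%N ->
  S m - 'X * S m.-1 = D m - 'X^k * D (m - k).
Proof.
move=> Hm; rewrite /S.
case: k hk Hm => [//|k'] _ Hm.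
rewrite big_ord_recl big_ord_recr /= expr0 mul1r subn0 mulrDr mulr_sumr.
rewrite (eq_bigr (fun i : 'I_k' => 'X * ('X^i * Fdown k'.+1 (m.-1 - i)))); last first.
  move=> i _; rewrite /bump add1n mulrA -exprS; congr (_ * Fdown _ _); lia.
rewrite opprD addrA addrK mulrA -exprS; congr (_ - _ * Fdown _ _); lia.
Qed.

Lemma D3 m : (k < m)%N ->
  D m = (1 + 'X^k) * D (m - k) - 'X * D (m - k - 1).
Proof.
move=> Hm.
have H := S_tel _ (ltnW Hm).
rewrite (S_big m) ?(S_big m.-1) in H; [|lia|lia].
have E : (m.-1 - k = m - k - 1)%N by lia.
rewrite E in H.
rewrite -[D m](subrK ('X^k * D (m - k))) -H mulrDl mul1r.
by rewrite addrAC.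
Qed.

End Down.

Definition sl (p : {poly int}) (n : nat) (c : int) := size p = n.+1 /\ lead_coef p = c.

Lemma sl_neq0 (p : {poly int}) n c : sl p n c -> p != 0.
Proof. by case=> hs _; rewrite -size_poly_gt0 hs. Qed.

Lemma slD1 (p q : {poly int}) n c : sl p n c -> (size q <= n)%N -> sl (p + q) n c.
Proof.
case=> hs hl hq; have lt : (size q < size p)%N by rewrite hs.
by split; [rewrite size_polyDl | rewrite lead_coefDl].
Qed.

Lemma slD2 (p q : {poly int}) n a b : sl p n a -> sl q n b -> a + b != 0 -> sl (p + q) n (a + b).
Proof.
case=> hp lp [hq lq] hab.
have cn : (p + q)`_n = a + b.
  by rewrite coefD -lp -lq !lead_coefE hp hq.
have le : (size (p + q)%R <= n.+1)%N.
  by apply: (leq_trans (size_polyD p q)); rewrite hp hq maxnn.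
have gt : (n < size (p + q)%R)%N.
  rewrite ltnNge; apply/negP => /leq_sizeP /(_ n (leqnn n)).
  by rewrite cn; apply/eqP.
have hs : size (p + q) = n.+1 by apply/eqP; rewrite eqn_leq le gt.
by split => //; rewrite lead_coefE hs.
Qed.

Lemma slN (p : {poly int}) n c : sl p n c -> sl (- p) n (- c).
Proof. by case=> hs hl; split; rewrite ?size_polyN ?lead_coefN ?hl. Qed.

Lemma slX (p : {poly int}) n c : sl p n c -> sl ('X * p) n.+1 c.
Proof.
move=> h; have nz := @sl_neq0 _ _ _ h; case: h => hs hl.
by rewrite mulrC; split; rewrite ?size_mulX ?lead_coefMX ?hs.
Qed.

Lemma slXk k (p : {poly int}) n c : (0 < k)%N -> sl p n c -> sl ((1 + 'X^k) * p) (n + k) c.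
Proof.
move=> hk h; have nz := @sl_neq0 _ _ _ h; case: h => hs hl.
have mon : (1 + 'X^k : {poly int}) \is monic.
  by rewrite addrC -polyC1 monicXnaddC.
have nz1 : (1 + 'X^k : {poly int}) != 0 by apply: monic_neq0.
split; last by rewrite lead_coefM (monicP mon) mul1r.
rewrite size_mul // hs addrC -polyC1 size_XnaddC //.
by rewrite addSn addnS /= addnC.
Qed.

Lemma size_Xle (p : {poly int}) : (size ('X * p)%R <= (size p).+1)%N.
Proof.
apply: (leq_trans (size_polyMleq _ _)); rewrite size_polyX.
by case: (size p).
Qed.

Lemma slE (p : {poly int}) n n' c c' : sl p n c -> n = n' -> c = c' -> sl p n' c'.
Proof. by move=> h <- <-. Qed.
Arguments slE {p n n' c c'}.
Arguments slX {p n c}.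
Arguments slN {p n c}.
Arguments slD1 {p q n c}.
Arguments slD2 {p q n a b}.
Arguments slXk {k p n c}.

Section Main.
Variable k : nat.
Hypothesis hk : (2 <= k)%N.
Local Notation D := (Fdown k).

Definition spec (Q r : nat) : Prop :=
  if r == 0%N then sl (D (Q * k + r)) ((Q - 1) * k) 1
  else if (Q < r)%N then D (Q * k + r) = 0
  else sl (D (Q * k + r)) (Q * k + r - k * r) ((-1) ^+ r * ('C(Q.-1, r.-1))%:R).

Lemma spec_bound Q r : (r < k)%N -> (0 < Q * k + r)%N -> spec Q r ->
  (size (D (Q * k + r)) <= (Q * k + r - k).+1)%N.
Proof.
rewrite /spec => hr hpos.
case: eqP => [r0 [-> _]|r0]; first by subst r; nia.
case: ltnP => [_ -> |hQ [-> _]]; first by rewrite size_poly0.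
nia.
Qed.

Lemma main_spec Q r : (r < k)%N -> (0 < Q * k + r)%N -> spec Q r.
Proof.
elim/ltn_ind: Q r => Q IH r hr hpos.
case: Q IH hpos => [|Q'] IH hpos.
  have r0 : (r != 0)%N by lia.
  rewrite /spec (negbTE r0) mul0n add0n.
  have -> : (0 < r)%N by lia.
  by apply: Dsmall; lia.
have IHs : forall Q0 r0, (Q0 < Q'.+1)%N -> (r0 < k)%N -> (0 < Q0 * k + r0)%N ->
    spec Q0 r0 by move=> Q0 r0 h1 h2 h3; apply: IH.
clear IH.
have hm := @D3 k hk.
case: (eqVneq r 0%N) => [r0|r0].
  subst r; rewrite /spec eqxx.
  case: Q' IHs hpos => [|Q''] IHs hpos.
    rewrite mul1n addn0 (@Dk k hk); split; [by rewrite size_poly1|by rewrite lead_coef1].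
  rewrite hm; last by nia.
  have E1 : (Q''.+2 * k + 0 - k = Q''.+1 * k + 0)%N by nia.
  have E2 : (Q''.+2 * k + 0 - k - 1 = Q'' * k + (k - 1))%N by nia.
  rewrite E2 E1.
  have S1 : spec Q''.+1 0 by apply: IHs; nia.
  have S2 : spec Q'' (k - 1) by apply: IHs; nia.
  have B2 : (size (D (Q'' * k + (k - 1))) <= (Q'' * k + (k - 1) - k).+1)%N.
    by apply: spec_bound => //; nia.
  rewrite /spec eqxx in S1.
  apply: (@slE _ (Q'' * k + k) _ 1 1); [| by nia | by []].
  apply: slD1.
    apply: slXk; first by lia.
    by apply: (slE S1) => //; nia.
  rewrite size_polyN; apply: (leq_trans (size_Xle _)); nia.
rewrite /spec (negbTE r0).
rewrite hm; last by nia.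
have E1 : (Q'.+1 * k + r - k = Q' * k + r)%N by nia.
have E2 : (Q'.+1 * k + r - k - 1 = Q' * k + (r - 1))%N by nia.
rewrite E2 E1; clear E1 E2.
have -> : (Q'.+1 < r)%N = (Q' < r.-1)%N by lia.
case: (eqVneq r 1%N) => [r1|r1].
  subst r; rewrite subnn /=.
  case: Q' IHs hpos => [|Q''] IHs hpos.
    rewrite mul0n !add0n (@Dsmall k 1) ?D0; last by lia.
    rewrite mulr0 mulr1 sub0r.
    apply: (@slE _ 1%N _ (-1) _); [| by nia | by rewrite expr1 bin0 mulr1].
    by apply: slN; split; [rewrite size_polyX | rewrite lead_coefX].
  have S1 : spec Q''.+1 1 by apply: IHs; nia.
  have S2 : spec Q''.+1 0 by apply: IHs; nia.
  have B2 : (size (D (Q''.+1 * k + 0)) <= (Q''.+1 * k + 0 - k).+1)%N.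
    by apply: spec_bound => //; nia.
  rewrite /spec /= in S1.
  apply: (@slE _ ((Q''.+1 * k + 1 - k * 1) + k) _ ((-1) ^+ 1 * ('C(Q'', 0))%:R) _);
    [| by nia | by rewrite !bin0].
  apply: slD1; first by apply: slXk => //; lia.
  rewrite size_polyN; apply: (leq_trans (size_Xle _)); nia.
have hr2 : (2 <= r)%N by lia.
have S1 : spec Q' r by apply: IHs; nia.
have S2 : spec Q' (r - 1) by apply: IHs; nia.
have [r2 Er] : exists r2, r = r2.+2 by exists (r - 2)%N; lia.
subst r; rewrite /spec /= subn1 /= in S1 S2; rewrite /=.
case: (ltngtP Q' r2.+1) => hQ.
- move: S1 S2; rewrite ifT; last by lia.
  rewrite ifT; last by lia.
  by move=> -> ->; rewrite !mulr0 subr0.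
- move: S1 S2; rewrite ifF; last by lia.
  rewrite ifF; last by lia.
  move=> S1 S2.
  have [Q2 EQ] : exists Q2, Q' = Q2.+1 by exists Q'.-1; lia.
  subst Q'; rewrite /= in S1 S2 *.
  have ceq : (-1) ^+ r2.+2 * ('C(Q2, r2.+1))%:R + - ((-1) ^+ r2.+1 * ('C(Q2, r2))%:R)
      = (-1) ^+ r2.+2 * ('C(Q2.+1, r2.+1))%:R :> int.
    by rewrite binS natrD !exprS; ring.
  apply: (@slE _ ((Q2.+1 * k + r2.+2 - k * r2.+2) + k) _ _ _); [| by nia | exact: ceq].
  apply: slD2.
  + by apply: slXk => //; lia.
  + apply: slN; rewrite subn1 /=; apply: (slE (slX S2)) => //; nia.
  + rewrite ceq mulf_neq0 ?signr_eq0 // pnatr_eq0 -lt0n bin_gt0; lia.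
- move: S1 S2; rewrite ifT; last by lia.
  rewrite ifF; last by lia.
  move=> -> S2; rewrite mulr0 sub0r.
  subst Q'.
  apply: (@slE _ ((r2.+1 * k + r2.+1 - k * r2.+1).+1) _ (- ((-1) ^+ r2.+1 * ('C(r2, r2))%:R)) _);
    [| by nia | by rewrite !binn !exprS; ring].
  by rewrite subn1 /=; apply: slN; apply: slX; exact: S2.
Qed.
End Main.

Lemma Fnk_neg (n : int) k : n <= 0 -> Fnk n k = Fdown k (`|n|%N).+1.
Proof. by case: n => [[|j]|j] //. Qed.

Theorem mainTheorem10 (k : nat) (hk : (2 <= k)%N) :
  (forall n : int, n <= 0 ->
     (Fnk n k = 0 <-> dnk n k < 0) /\
     (0 <= dnk n k ->
        size (Fnk n k) = (`|dnk n k|%N).+1 /\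
        lead_coef (Fnk n k) =
          (if rnk n k == 0%N then 1
           else (-1) ^+ rnk n k * ('C((qnk n k).-1, (rnk n k).-1))%:R))) /\
  ((3 <= k)%N ->
     exists n1 n2 : int,
       [/\ n1 < 0, n2 < 0 & (`|n1| < `|n2|)%N] /\
       [/\ Fnk n1 k != 0, Fnk n2 k != 0 &
           ((size (Fnk n2 k)).-1 < (size (Fnk n1 k)).-1)%N]).
Proof.
split.
  move=> n hn; rewrite (Fnk_neg _ k hn) /dnk /rnk /qnk.
  move: (`|n|%N).+1 (ltn0Sn (`|n|%N)) => m hm.
  have Em := divn_eq m k.
  have hr : (m %% k < k)%N by rewrite ltn_mod; lia.
  have Sp : spec k (m %/ k) (m %% k) by apply: (@main_spec k hk) => //; rewrite -Em.
  rewrite /spec -Em in Sp.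
  move: Sp Em hr; move: (m %/ k)%N (m %% k)%N => Q r Sp Em hr.
  case: eqP Sp => [r0|r0] Sp.
    subst r; case: Sp => hs hl.
    have nz : Fdown k m != 0 by rewrite -size_poly_gt0 hs.
    have km : (k <= m)%N.
      case: (Q) Em => [|Q'] Em; first by move: hm; rewrite Em mul0n.
      by rewrite Em addn0 mulSn leq_addr.
    split; first by split => [h|h]; [rewrite h eqxx in nz | rewrite subr_lt0 ltz_nat in h; lia].
    move=> _; split => //; rewrite hs subzn // absz_nat; congr (_.+1); nia.
  case: ltnP Sp => hQ Sp.
    rewrite Sp; split; [split => // _; nia | move=> h; exfalso; nia].
  case: Sp => hs hl.
  have nz : Fdown k m != 0 by rewrite -size_poly_gt0 hs.
  split; first by split => [h|h]; [rewrite h eqxx in nz | nia].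
  move=> _; split => //; rewrite hs; congr (_.+1); nia.
move=> hk3.
exists (Negz (2 * k).-1), (Negz (2 * k)).
have S1 : spec k 2 1 by apply: (@main_spec k hk) => //; lia.
have S2 : spec k 2 2 by apply: (@main_spec k hk) => //; lia.
rewrite /spec /= in S1 S2.
have E1 : ((2 * k).-1.+2 = 2 * k + 1)%N by lia.
have E2 : ((2 * k).+2 = 2 * k + 2)%N by lia.
rewrite /Fnk E1 E2.
case: S1 => hs1 _; case: S2 => hs2 _.
split; first by split => //=; lia.
split.
- by rewrite -size_poly_gt0 hs1.
- by rewrite -size_poly_gt0 hs2.
- rewrite hs1 hs2 /=; nia.
Qed.
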